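(* Let $d\ge1$ and $m>d/2$, and let $a_1,a_2,a_3>0$. There exist constants $c_1,c_2,c_3,c_4>0$, depending only on $a_1,a_2,a_3,m,d$, such that for all $\lambda>0$, all nonnegative $P,Q,s,t$ and every positive integer $n$: if $$P^2+a_1\lambda Q^2\le a_2s\lambda P+a_3tn^{-1/2}P^{1-\frac{d}{2m}}Q^{\frac{d}{2m}},$$ then $$P\le c_1s\lambda\vee c_2tn^{-1/2}\lambda^{-\frac{d}{4m}},\qquad Q\le c_3s\lambda^{1/2}\vee c_4tn^{-1/2}\lambda^{-\frac{2m+d}{4m}}.$$
   Context: $a\vee b=\max\{a,b\}$. *)

(* Defs.v *)
From Stdlib Require Import Reals.
Open Scope R_scope.

(* Real power for nonnegative base x: x^y, with the convention 0^y = 0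
   (appropriate for positive exponents y, which is the only use below). *)
Definition rpow (x y : R) : R := if Req_EM_T x 0 then 0 else Rpower x y.

(* Main.v *)
Require Import Defs.
From Stdlib Require Import Reals Lra Psatz.
Open Scope R_scope.

Lemma ln_le_inv' x y : 0 < x -> 0 < y -> ln x <= ln y -> x <= y.
Proof.
  intros Hx Hy H. destruct (Rle_or_lt x y) as [h|h]; auto.
  pose proof (ln_increasing y x Hy h). lra.
Qed.

Lemma rpow_pos_eq x y : 0 < x -> rpow x y = Rpower x y.
Proof. intros Hx. unfold rpow. destruct (Req_EM_T x 0); [lra|auto]. Qed.

Lemma rpow_nonneg x y : 0 <= rpow x y.
Proof. unfold rpow. destruct (Req_EM_T x 0). lra. left; apply exp_pos. Qed.

Lemma rpow_zero y : rpow 0 y = 0.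
Proof. unfold rpow. destruct (Req_EM_T 0 0); [auto|lra]. Qed.

Ltac pos := repeat (first [lra | apply exp_pos | apply Rmult_lt_0_compat | apply Rinv_0_lt_compat]).

Theorem lemmaA2 (d : nat) (m a1 a2 a3 : R) :
  (1 <= d)%nat -> INR d / 2 < m -> 0 < a1 -> 0 < a2 -> 0 < a3 ->
  exists c1 c2 c3 c4 : R, 0 < c1 /\ 0 < c2 /\ 0 < c3 /\ 0 < c4 /\
    forall (lam P Q s t : R) (n : nat),
      0 < lam -> 0 <= P -> 0 <= Q -> 0 <= s -> 0 <= t -> (1 <= n)%nat ->
      P ^ 2 + a1 * lam * Q ^ 2 <=
        a2 * s * lam * P
        + a3 * t * / sqrt (INR n) * rpow P (1 - INR d / (2 * m)) * rpow Q (INR d / (2 * m)) ->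
      P <= Rmax (c1 * s * lam) (c2 * t * / sqrt (INR n) * Rpower lam (- (INR d / (4 * m)))) /\
      Q <= Rmax (c3 * s * sqrt lam)
                (c4 * t * / sqrt (INR n) * Rpower lam (- ((2 * m + INR d) / (4 * m)))).
Proof.
  intros Hd Hm Ha1 Ha2 Ha3.
  assert (HD : 1 <= INR d) by (apply (le_INR 1); auto).
  assert (Hm0 : 0 < m) by lra.
  set (r := INR d / (2 * m)).
  assert (Hr0 : 0 < r) by (unfold r; apply Rdiv_lt_0_compat; lra).
  assert (Hr1 : r < 1) by (unfold r; apply (Rmult_lt_reg_r (2*m)); [lra|]; field_simplify; lra).
  assert (E1 : - (INR d / (4 * m)) = - (r / 2)) by (unfold r; field; lra).
  assert (E2 : - ((2 * m + INR d) / (4 * m)) = - ((1 + r) / 2)) by (unfold r; field; lra).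
  rewrite E1, E2.
  assert (Hsa1 : 0 < sqrt a1) by (apply sqrt_lt_R0; lra).
  exists (2 * a2), (2 * a3 * Rpower a1 (- (r / 2))), (2 * a2 / sqrt a1),
         (2 * a3 * Rpower a1 (- ((1 + r) / 2))).
  assert (Hpa : forall y, 0 < Rpower a1 y) by (intros; apply exp_pos).
  split; [lra|]. split; [pose proof (Hpa (-(r/2))); nra|].
  split; [apply Rdiv_lt_0_compat; lra|]. split; [pose proof (Hpa (-((1+r)/2))); nra|].
  intros lam P Q s t n Hl HP HQ Hs Ht Hn H.
  assert (Hsn : 0 < sqrt (INR n)) by (apply sqrt_lt_R0; apply (lt_INR 0); lia).
  set (T := t * / sqrt (INR n)) in *.
  assert (HT0 : 0 <= T) by (unfold T; pose proof (Rinv_0_lt_compat _ Hsn); nra).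
  set (E := a3 * t * / sqrt (INR n) * rpow P (1 - r) * rpow Q r) in *.
  assert (HE : E = a3 * T * rpow P (1 - r) * rpow Q r) by (unfold E, T; ring).
  assert (HE0 : 0 <= E).
  { rewrite HE. pose proof (rpow_nonneg P (1-r)); pose proof (rpow_nonneg Q r).
    apply Rmult_le_pos; [apply Rmult_le_pos|]; nra. }
  assert (Hsl : 0 < sqrt lam) by (apply sqrt_lt_R0; lra).
  assert (Hsl2 : sqrt lam * sqrt lam = lam) by (apply sqrt_sqrt; lra).
  assert (Hsa2 : sqrt a1 * sqrt a1 = a1) by (apply sqrt_sqrt; lra).
  destruct (Rle_or_lt E (a2 * s * lam * P)) as [CA|CB].
  -
    assert (HQ2p : 0 <= a1 * lam * Q ^ 2) by (apply Rmult_le_pos; nra).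
    assert (HPP : P * P <= (2 * a2 * s * lam) * P) by nra.
    assert (Hc0 : 0 <= 2 * a2 * s * lam) by (apply Rmult_le_pos; nra).
    assert (HPb : P <= 2 * a2 * s * lam).
    { destruct (Rle_or_lt P (2 * a2 * s * lam)); auto. nra. }
    split; [eapply Rle_trans; [|apply Rmax_l]; lra|].
    eapply Rle_trans; [|apply Rmax_l].
    set (X := 2 * a2 / sqrt a1 * s * sqrt lam).
    assert (HX0 : 0 <= X).
    { unfold X. assert (0 < 2 * a2 / sqrt a1) by (apply Rdiv_lt_0_compat; lra).
      apply Rmult_le_pos; [apply Rmult_le_pos|]; lra. }
    assert (HX2 : a1 * (X * X) = 4 * a2 ^ 2 * s ^ 2 * lam).
    { unfold X. replace (2 * a2 / sqrt a1 * s * sqrt lam * (2 * a2 / sqrt a1 * s * sqrt lam))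
        with (4 * a2^2 * s^2 * (sqrt lam * sqrt lam) / (sqrt a1 * sqrt a1)) by (field; lra).
      rewrite Hsl2, Hsa2. field. lra. }
    assert (HQ2 : a1 * lam * (Q * Q) <= a1 * lam * (X * X)).
    { replace (a1 * lam * (X * X)) with (lam * (a1 * (X * X))) by ring. rewrite HX2.
      assert (a1 * lam * (Q * Q) <= 2 * a2 * s * lam * P) by nra.
      assert (2 * a2 * s * lam * P <= 2 * a2 * s * lam * (2 * a2 * s * lam)) by nra.
      nra. }
    assert (HQX : Q * Q <= X * X).
    { apply (Rmult_le_reg_l (a1 * lam)); nra. }
    nra.
  -
    assert (HEp : 0 < E) by (pose proof (Rmult_le_pos _ _ (Rmult_le_pos _ _ (Rmult_le_pos _ _ (Rlt_le _ _ Ha2) Hs) (Rlt_le _ _ Hl)) HP); lra).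
    assert (HPp : 0 < P).
    { destruct HP as [h|h]; auto. rewrite <- h in HE. rewrite rpow_zero in HE. lra. }
    assert (HQp : 0 < Q).
    { destruct HQ as [h|h]; auto. rewrite <- h in HE. rewrite rpow_zero in HE. lra. }
    assert (HTp : 0 < T).
    { destruct HT0 as [h|h]; auto. rewrite <- h in HE. lra. }
    rewrite (rpow_pos_eq _ _ HPp), (rpow_pos_eq _ _ HQp) in HE.
    assert (HQ2p : 0 <= a1 * lam * Q ^ 2) by (apply Rmult_le_pos; nra).
    assert (I1 : P * P < 2 * E) by nra.
    assert (I2 : a1 * lam * (Q * Q) < 2 * E) by nra.
    assert (L2E : ln (2 * E) = ln 2 + ln a3 + ln T + (1 - r) * ln P + r * ln Q).
    { rewrite HE. replace (2 * (a3 * T * Rpower P (1 - r) * Rpower Q r))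
        with ((2 * a3) * T * Rpower P (1 - r) * Rpower Q r) by ring.
      rewrite !ln_mult; try (repeat pos).
      rewrite !ln_Rpower. ring. }
    apply ln_increasing in I1; [|pos].
    apply ln_increasing in I2; [|pos].
    rewrite L2E in I1, I2.
    rewrite ln_mult in I1 by pos.
    rewrite !ln_mult in I2 by pos.
    set (p := ln P) in *. set (q := ln Q) in *. set (l := ln lam) in *.
    set (k := ln 2 + ln a3 + ln T) in *. set (al := ln a1) in *.
    assert (F1 : (1 + r) * p <= k + r * q) by lra.
    assert (F2 : al + l + (2 - r) * q <= k + (1 - r) * p) by lra.
    split; (eapply Rle_trans; [|apply Rmax_r]).
    + 
      replace (2 * a3 * Rpower a1 (- (r / 2)) * t * / sqrt (INR n) * Rpower lam (- (r / 2)))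
        with ((2 * a3) * T * Rpower a1 (- (r / 2)) * Rpower lam (- (r / 2))) by (unfold T; ring).
      apply ln_le_inv'; [lra|pos|].
      rewrite !ln_mult; try (repeat pos).
      rewrite !ln_Rpower. fold p l al.
      assert (G : 2 * p <= 2 * k - r * (al + l)).
      { assert (0 <= 2 - r) by lra. nra. }
      unfold k in G. lra.
    + 
      replace (2 * a3 * Rpower a1 (- ((1 + r) / 2)) * t * / sqrt (INR n) * Rpower lam (- ((1 + r) / 2)))
        with ((2 * a3) * T * Rpower a1 (- ((1 + r) / 2)) * Rpower lam (- ((1 + r) / 2))) by (unfold T; ring).
      apply ln_le_inv'; [lra|pos|].
      rewrite !ln_mult; try (repeat pos).
      rewrite !ln_Rpower. fold q l al.
      assert (G : 2 * q <= 2 * k - (1 + r) * (al + l)).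
      { assert (0 <= 1 - r) by lra. assert (0 <= 1 + r) by lra. nra. }
      unfold k in G. lra.
Qed.
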